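(* Let $T$ be an $L_1$-periodic tiling of type $(\gamma_1,\gamma_2,\gamma_3)$ with $\gamma_1,\gamma_2,\gamma_3>0$. Then there is no infinite path in $T$. Equivalently, the cut quiver on $L_0/L_1$ (the quiver with vertices $L_0/L_1$ and the arrows in $T$) is acyclic.
   Context: Let $u^\top=(1,0)$, $v^\top=-(\tfrac12,\tfrac{\sqrt3}{2})$, $w=-(u+v)$, $L_0=\langle u,v\rangle$, and $L_1\le L_0$ a full-rank sublattice with $n=|L_0/L_1|$. An $L_1$-periodic tiling is an $L_1$-invariant map $T\colon L_0\to\{U,V,W\}$ such that for every $x$ exactly one of $T(x)=W$, $T(x+u)=V$, $T(x-v)=U$ holds; $T(x)$ removes one arrow of the upward triangle $x\to x+u\to x-v\to x$ ($U$: $x\to x+u$; $V$: $x-v\to x$; $W$: $x+u\to x-v$), and an arrow $x\to x+\alpha$ ($\alpha\in\{u,v,w\}$) is in $T$ if not removed; a path is in $T$ if all its arrows are. The type of $T$ is $(\#\tilde T^{-1}(U),\#\tilde T^{-1}(V),\#\tilde T^{-1}(W))$ for the induced map $\tilde T$ on $L_0/L_1$. *)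

(* Defs.v *)
(* the lattice L0 = Z u + Z v is identified with Z^2 via
   coordinates (a,b) <-> a*u + b*v. *)
From Stdlib Require Import ZArith List.
Open Scope Z_scope.

Definition pt := (Z * Z)%type.
Definition padd (x y : pt) : pt := (fst x + fst y, snd x + snd y).
Definition psub (x y : pt) : pt := (fst x - fst y, snd x - snd y).
Definition pscale (k : Z) (x : pt) : pt := (k * fst x, k * snd x).

Definition u : pt := (1, 0).
Definition v : pt := (0, 1).
Definition w : pt := (-1, -1).

Definition inL1 (b1 b2 : pt) (x : pt) : Prop :=
  exists p q : Z, x = padd (pscale p b1) (pscale q b2).
Definition full_rank (b1 b2 : pt) : Prop :=
  fst b1 * snd b2 - snd b1 * fst b2 <> 0.

Inductive tile := TU | TV | TW.

Definition exactly_one3 (P Q R : Prop) : Prop :=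
  (P /\ ~ Q /\ ~ R) \/ (~ P /\ Q /\ ~ R) \/ (~ P /\ ~ Q /\ R).

Definition L1_invariant (b1 b2 : pt) (T : pt -> tile) : Prop :=
  forall x l, inL1 b1 b2 l -> T (padd x l) = T x.

Definition tiling_cond (T : pt -> tile) : Prop :=
  forall x, exactly_one3 (T x = TW) (T (padd x u) = TV) (T (psub x v) = TU).

Definition periodic_tiling (b1 b2 : pt) (T : pt -> tile) : Prop :=
  L1_invariant b1 b2 T /\ tiling_cond T.

(* Number of L1-cosets (elements of L0/L1) on which the L1-invariant
   predicate P holds equals n: there are n pairwise non-congruent
   representatives satisfying P, and every point satisfying P is congruent
   to one of them. *)
Definition coset_count (b1 b2 : pt) (P : pt -> Prop) (n : nat) : Prop :=
  exists reps : list pt,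
    length reps = n /\
    (forall r, In r reps -> P r) /\
    (forall i j, (i < n)%nat -> (j < n)%nat -> i <> j ->
       ~ inL1 b1 b2 (psub (nth i reps (0,0)) (nth j reps (0,0)))) /\
    (forall x, P x -> exists r, In r reps /\ inL1 b1 b2 (psub x r)).

Definition has_type (b1 b2 : pt) (T : pt -> tile) (g1 g2 g3 : nat) : Prop :=
  coset_count b1 b2 (fun x => T x = TU) g1 /\
  coset_count b1 b2 (fun x => T x = TV) g2 /\
  coset_count b1 b2 (fun x => T x = TW) g3.

Inductive dir := Du | Dv | Dw.
Definition dvec (d : dir) : pt := match d with Du => u | Dv => v | Dw => w end.

(* The arrow x -> x + dvec d belongs to exactly one upward triangle
   y -> y+u -> y-v -> y, and is removed iff T y removes it:
   - x -> x+u is the U-arrow of the triangle at y = x;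
   - x -> x+v is the V-arrow (y-v -> y) of the triangle at y = x+v;
   - x -> x+w is the W-arrow (y+u -> y-v) of the triangle at y = x-u. *)
Definition arrow_in (T : pt -> tile) (x : pt) (d : dir) : Prop :=
  match d with
  | Du => T x <> TU
  | Dv => T (padd x v) <> TV
  | Dw => T (psub x u) <> TW
  end.

Definition infinite_path (T : pt -> tile) : Prop :=
  exists (f : nat -> pt) (ds : nat -> dir),
    forall k, f (S k) = padd (f k) (dvec (ds k)) /\ arrow_in T (f k) (ds k).

(* Main.v *)
Require Import Defs.
From Stdlib Require Import ZArith List.
From Stdlib Require Import ZArith List Lia.
Open Scope Z_scope.

Definition iU (T : pt -> tile) (x : pt) : Z := match T x with TU => 1 | _ => 0 end.
Definition iV (T : pt -> tile) (x : pt) : Z := match T x with TV => 1 | _ => 0 end.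
Definition iW (T : pt -> tile) (x : pt) : Z := match T x with TW => 1 | _ => 0 end.

Lemma i_sum T x : iU T x + iV T x + iW T x = 1.
Proof. unfold iU, iV, iW; destruct (T x); reflexivity. Qed.
Lemma iU_nn T x : 0 <= iU T x. Proof. unfold iU; destruct (T x); lia. Qed.
Lemma iV_nn T x : 0 <= iV T x. Proof. unfold iV; destruct (T x); lia. Qed.
Lemma iW_nn T x : 0 <= iW T x. Proof. unfold iW; destruct (T x); lia. Qed.
Lemma iU_eq T x : T x = TU -> iU T x = 1. Proof. unfold iU; intros H; rewrite H; reflexivity. Qed.
Lemma iV_eq T x : T x = TV -> iV T x = 1. Proof. unfold iV; intros H; rewrite H; reflexivity. Qed.
Lemma iW_eq T x : T x = TW -> iW T x = 1. Proof. unfold iW; intros H; rewrite H; reflexivity. Qed.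
Lemma iU_neq T x : T x <> TU -> iU T x = 0. Proof. unfold iU; destruct (T x); intros H; congruence. Qed.
Lemma iV_neq T x : T x <> TV -> iV T x = 0. Proof. unfold iV; destruct (T x); intros H; congruence. Qed.
Lemma iW_neq T x : T x <> TW -> iW T x = 0. Proof. unfold iW; destruct (T x); intros H; congruence. Qed.

Lemma rhombus T (HT : tiling_cond T) a b :
  iU T (a,b) + iV T (a+1,b+1) = iV T (a,b+1) + iU T (a,b+1).
Proof.
  pose proof (HT (a, b+1)) as H.
  replace (padd (a,b+1) u) with (a+1,b+1) in H by (unfold padd, u; simpl; f_equal; ring).
  replace (psub (a,b+1) v) with (a,b) in H by (unfold psub, v; simpl; f_equal; ring).
  pose proof (i_sum T (a,b+1)).
  unfold exactly_one3 in H.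
  destruct H as [[H1 [H2 H3]]|[[H1 [H2 H3]]|[H1 [H2 H3]]]].
  - pose proof (iW_eq _ _ H1); pose proof (iV_neq _ _ H2); pose proof (iU_neq _ _ H3). lia.
  - pose proof (iW_neq _ _ H1); pose proof (iV_eq _ _ H2); pose proof (iU_neq _ _ H3). lia.
  - pose proof (iW_neq _ _ H1); pose proof (iV_neq _ _ H2); pose proof (iU_eq _ _ H3). lia.
Qed.

Fixpoint sumpos (f : Z -> Z) (n : nat) : Z :=
  match n with O => 0 | S m => sumpos f m + f (Z.of_nat m) end.
Fixpoint sumneg (f : Z -> Z) (n : nat) : Z :=
  match n with O => 0 | S m => sumneg f m + f (- Z.of_nat (S m)) end.
Definition cnt (f : Z -> Z) (a : Z) : Z :=
  if Z.leb 0 a then sumpos f (Z.to_nat a) else - sumneg f (Z.to_nat (- a)).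

Lemma cnt0 f : cnt f 0 = 0. Proof. reflexivity. Qed.

Lemma cntS f a : cnt f (a + 1) = cnt f a + f a.
Proof.
  unfold cnt.
  destruct (Z.leb_spec 0 a) as [Ha|Ha].
  - destruct (Z.leb_spec 0 (a+1)) as [Ha1|Ha1]; [|lia].
    replace (Z.to_nat (a+1)) with (S (Z.to_nat a)) by lia.
    cbn [sumpos]. rewrite Z2Nat.id by lia. reflexivity.
  - replace (Z.to_nat (-a)) with (S (Z.to_nat (-(a+1)))) by lia.
    cbn [sumneg]. rewrite Nat2Z.inj_succ, Z2Nat.id by lia.
    replace (- Z.succ (- (a+1))) with a by lia.
    destruct (Z.leb_spec 0 (a+1)) as [Ha1|Ha1].
    + assert (E : a + 1 = 0) by lia.
      replace (Z.to_nat (-(a+1))) with O by lia. rewrite E. cbn. ring.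
    + ring.
Qed.

Lemma Zind_eq (g h : Z -> Z) : g 0 = h 0 -> (forall a, g (a+1) - g a = h (a+1) - h a) -> forall a, g a = h a.
Proof.
  intros H0 HS a. induction a using Z.peano_ind.
  - exact H0.
  - specialize (HS a). rewrite <- Z.add_1_r. lia.
  - specialize (HS (Z.pred a)). replace (Z.pred a + 1) with a in HS by lia. lia.
Qed.

Lemma cnt_add f s t : cnt f (s+t) = cnt f s + cnt (fun j => f (s+j)) t.
Proof.
  revert t.
  apply (Zind_eq (fun t => cnt f (s+t)) (fun t => cnt f s + cnt (fun j => f (s+j)) t)); cbv beta.
  - rewrite Z.add_0_r, cnt0. ring.
  - intros t. replace (s + (t+1)) with ((s+t)+1) by ring. rewrite !cntS. cbv beta. ring.
Qed.

Lemma cnt_ext f g t : (forall j, f j = g j) -> cnt f t = cnt g t.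
Proof.
  intros H. revert t.
  apply (Zind_eq (fun t => cnt f t) (fun t => cnt g t)); cbv beta.
  - reflexivity.
  - intros t. rewrite !cntS, H. ring.
Qed.

Lemma cnt_nonneg f t : (forall j, 0 <= f j) -> 0 <= t -> 0 <= cnt f t.
Proof.
  intros Hf. revert t. apply natlike_ind.
  - rewrite cnt0; lia.
  - intros x Hx IH. rewrite <- Z.add_1_r, cntS. specialize (Hf x). lia.
Qed.

Lemma cnt_ge f k t : (forall j, 0 <= f j) -> 0 <= k < t -> f k <= cnt f t.
Proof.
  intros Hf Hk.
  replace t with ((k+1) + (t - (k+1))) by ring. rewrite cnt_add, cntS.
  pose proof (cnt_nonneg f k Hf ltac:(lia)).
  pose proof (cnt_nonneg (fun j => f (k+1+j)) (t - (k+1)) (fun j => Hf _) ltac:(lia)).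
  lia.
Qed.

Lemma cnt_per f N : (forall j p, f (j + N*p) = f j) -> forall p, cnt f (N*p) = p * cnt f N.
Proof.
  intros Hf.
  apply (Zind_eq (fun p => cnt f (N*p)) (fun p => p * cnt f N)); cbv beta.
  - rewrite Z.mul_0_r, cnt0. ring.
  - intros p. replace (N*(p+1)) with (N*p + N) by ring. rewrite cnt_add.
    rewrite (cnt_ext (fun j => f (N*p + j)) f) by (intros j; rewrite Z.add_comm; apply Hf).
    ring.
Qed.
Definition zz T (x : pt) : Z :=
  - cnt (fun j => iU T (j, 0)) (fst x) - cnt (fun j => iV T (fst x, j + 1)) (snd x).

Lemma zV T a b : zz T (a, b+1) = zz T (a,b) - iV T (a, b+1).
Proof. unfold zz; cbn [fst snd]. rewrite cntS. cbv beta. ring. Qed.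

Lemma zU T (HT: tiling_cond T) a b : zz T (a+1, b) = zz T (a,b) - iU T (a,b).
Proof.
  assert (Hc : forall b, cnt (fun j => iV T (a+1, j+1)) b - cnt (fun j => iV T (a, j+1)) b
                         = iU T (a,b) - iU T (a,0)).
  { apply (Zind_eq (fun b => cnt (fun j => iV T (a+1, j+1)) b - cnt (fun j => iV T (a, j+1)) b)
                   (fun b => iU T (a,b) - iU T (a,0))).
    - cbv beta. rewrite !cnt0. ring.
    - intros c. cbv beta. rewrite !cntS. cbv beta. pose proof (rhombus T HT a c). lia. }
  unfold zz; cbn [fst snd]. rewrite cntS. cbv beta. specialize (Hc b). lia.
Qed.

Lemma zW T (HT: tiling_cond T) a b : zz T (a-1, b-1) = zz T (a,b) + 1 - iW T (a-1, b).
Proof.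
  pose proof (zU T HT (a-1) b) as H1. replace (a-1+1) with a in H1 by ring.
  pose proof (zV T (a-1) (b-1)) as H2. replace (b-1+1) with b in H2 by ring.
  pose proof (i_sum T (a-1,b)). lia.
Qed.

Definition Tper (T : pt -> tile) N := forall a b p q, T (a + N*p, b + N*q) = T (a,b).

Lemma iU_per T N (H : Tper T N) a b a' b' p q : a' = a + N*p -> b' = b + N*q -> iU T (a',b') = iU T (a,b).
Proof. intros -> ->; unfold iU; rewrite H; reflexivity. Qed.
Lemma iV_per T N (H : Tper T N) a b a' b' p q : a' = a + N*p -> b' = b + N*q -> iV T (a',b') = iV T (a,b).
Proof. intros -> ->; unfold iV; rewrite H; reflexivity. Qed.
Lemma iW_per T N (H : Tper T N) a b a' b' p q : a' = a + N*p -> b' = b + N*q -> iW T (a',b') = iW T (a,b).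
Proof. intros -> ->; unfold iW; rewrite H; reflexivity. Qed.

Lemma Dconst T (HT: tiling_cond T) N (Hp : Tper T N) p q a b :
  zz T (a + N*p, b + N*q) - zz T (a,b) = zz T (N*p, N*q) - zz T (0,0).
Proof.
  assert (Ha : forall b a, zz T (a + N*p, b + N*q) - zz T (a,b) = zz T (0 + N*p, b+N*q) - zz T (0,b)).
  { intros b0.
    apply (Zind_eq (fun a => zz T (a + N*p, b0 + N*q) - zz T (a,b0))
                   (fun a => zz T (0 + N*p, b0+N*q) - zz T (0,b0))); [reflexivity|].
    intros a0. cbv beta.
    replace (a0 + 1 + N*p) with ((a0 + N*p) + 1) by ring. rewrite !(zU T HT).
    rewrite (iU_per T N Hp a0 b0 (a0 + N*p) (b0 + N*q) p q) by ring. ring. }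
  assert (Hb : forall b, zz T (0 + N*p, b + N*q) - zz T (0,b) = zz T (0 + N*p, 0+N*q) - zz T (0,0)).
  { apply (Zind_eq (fun b => zz T (0 + N*p, b + N*q) - zz T (0,b))
                   (fun b => zz T (0 + N*p, 0+N*q) - zz T (0,0))); [reflexivity|].
    intros b0. cbv beta.
    replace (b0 + 1 + N*q) with ((b0 + N*q) + 1) by ring. rewrite !zV.
    rewrite (iV_per T N Hp 0 (b0+1) (0 + N*p) (b0 + N*q + 1) p q) by ring. ring. }
  rewrite Ha, Hb, !Z.add_0_l. reflexivity.
Qed.

Lemma Dformula T N (Hp : Tper T N) p q :
  zz T (N*p, N*q) = - p * cnt (fun j => iU T (j,0)) N - q * cnt (fun j => iV T (0, j+1)) N.
Proof.
  unfold zz; cbn [fst snd].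
  rewrite (cnt_ext (fun j => iV T (N*p, j+1)) (fun j => iV T (0, j+1)))
    by (intros j; apply (iV_per T N Hp 0 (j+1) _ _ p 0); ring).
  rewrite (cnt_per (fun j => iU T (j,0)) N) by (intros j p'; apply (iU_per T N Hp j 0 _ _ p' 0); ring).
  rewrite (cnt_per (fun j => iV T (0,j+1)) N) by (intros j p'; apply (iV_per T N Hp 0 (j+1) _ _ 0 p'); ring).
  ring.
Qed.

Lemma zz00 T : zz T (0,0) = 0. Proof. reflexivity. Qed.

Lemma zrow T (HT: tiling_cond T) a b t : zz T (a + t, b) - zz T (a,b) = - cnt (fun j => iU T (a + j, b)) t.
Proof.
  revert t.
  apply (Zind_eq (fun t => zz T (a + t, b) - zz T (a,b)) (fun t => - cnt (fun j => iU T (a + j, b)) t)); cbv beta.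
  - rewrite Z.add_0_r, cnt0. ring.
  - intros t. replace (a + (t+1)) with ((a+t)+1) by ring. rewrite zU, cntS by exact HT. cbv beta. ring.
Qed.

Lemma zcol T a b t : zz T (a, b + t) - zz T (a,b) = - cnt (fun j => iV T (a, b + j + 1)) t.
Proof.
  revert t.
  apply (Zind_eq (fun t => zz T (a, b + t) - zz T (a,b)) (fun t => - cnt (fun j => iV T (a, b + j + 1)) t)); cbv beta.
  - rewrite Z.add_0_r, cnt0. ring.
  - intros t. replace (b + (t+1)) with ((b+t)+1) by ring. rewrite zV, cntS. cbv beta. ring.
Qed.

Lemma zdiag T (HT: tiling_cond T) c d t : zz T (c - t, d - t) - zz T (c,d) = t - cnt (fun k => iW T (c - 1 - k, d - k)) t.
Proof.
  revert t.
  apply (Zind_eq (fun t => zz T (c - t, d - t) - zz T (c,d)) (fun t => t - cnt (fun k => iW T (c - 1 - k, d - k)) t)); cbv beta.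
  - rewrite cnt0, !Z.sub_0_r. ring.
  - intros t. replace (c - (t+1)) with ((c-t)-1) by ring. replace (d - (t+1)) with ((d-t)-1) by ring.
    rewrite zW, cntS by exact HT. cbv beta. replace (c - t - 1) with (c - 1 - t) by ring. ring.
Qed.

Definition Phi T N r1 r2 (x : pt) : Z := r1 * fst x + r2 * snd x + N * zz T x.

Lemma line_bound (h : Z -> Z) (m : nat) : exists M, forall b, 0 <= b < Z.of_nat m -> h b <= M.
Proof. induction m as [|m [M HM]].
 - exists 0. intros; lia.
 - exists (Z.max M (h (Z.of_nat m))). intros b Hb. rewrite Nat2Z.inj_succ in Hb.
   destruct (Z.eq_dec b (Z.of_nat m)) as [->|]. lia. specialize (HM b ltac:(lia)). lia.
Qed.
Lemma box_bound (g : Z -> Z -> Z) (n m : nat) : exists M, forall a b, 0 <= a < Z.of_nat n -> 0 <= b < Z.of_nat m -> g a b <= M.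
Proof. induction n as [|n [M HM]].
 - exists 0; intros; lia.
 - destruct (line_bound (g (Z.of_nat n)) m) as [M2 HM2]. exists (Z.max M M2). intros a b Ha Hb.
   rewrite Nat2Z.inj_succ in Ha. destruct (Z.eq_dec a (Z.of_nat n)) as [->|].
   + specialize (HM2 b Hb); lia.
   + specialize (HM a b ltac:(lia) Hb). lia.
Qed.

Lemma Phi_per T (HT: tiling_cond T) N (Hp : Tper T N) r1 r2 :
  r1 = cnt (fun j => iU T (j,0)) N -> r2 = cnt (fun j => iV T (0, j+1)) N ->
  forall a b p q, Phi T N r1 r2 (a + N*p, b + N*q) = Phi T N r1 r2 (a,b).
Proof.
  intros E1 E2 a b p q.
  pose proof (Dconst T HT N Hp p q a b) as H.
  rewrite Dformula, zz00 in H by exact Hp. rewrite <- E1, <- E2 in H.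
  unfold Phi; cbn [fst snd].
  replace (zz T (a + N*p, b + N*q)) with (zz T (a,b) + (- p * r1 - q * r2)) by lia.
  ring.
Qed.

Theorem lemma6p40 (b1 b2 : pt) (T : pt -> tile) (g1 g2 g3 : nat) :
  full_rank b1 b2 ->
  periodic_tiling b1 b2 T ->
  has_type b1 b2 T g1 g2 g3 ->
  (0 < g1)%nat -> (0 < g2)%nat -> (0 < g3)%nat ->
  ~ infinite_path T.
Proof.
  intros Hfr [Hinv HT] Hty Hg1 Hg2 Hg3 [f [ds Hpath]].
  destruct b1 as [b11 b12], b2 as [b21 b22].
  unfold full_rank in Hfr; cbn [fst snd] in Hfr.
  remember (Z.abs (b11*b22 - b12*b21)) as N eqn:EN.
  assert (HN : 0 < N) by lia.
  assert (Hp : Tper T N).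
  { intros a b p q.
    assert (Hl : inL1 (b11,b12) (b21,b22) (N*p, N*q)).
    { destruct (Z.abs_spec (b11*b22 - b12*b21)) as [[_ E]|[_ E]]; rewrite E in EN; subst N.
      - exists (b22*p - b21*q), (-b12*p + b11*q). unfold padd, pscale; cbn. f_equal; ring.
      - exists (-(b22*p - b21*q)), (-(-b12*p + b11*q)). unfold padd, pscale; cbn. f_equal; ring. }
    pose proof (Hinv (a,b) _ Hl) as H. exact H. }
  set (r1 := cnt (fun j => iU T (j,0)) N).
  set (r2 := cnt (fun j => iV T (0, j+1)) N).
  destruct Hty as [[rU [LU [HU _]]] [[rV [LV [HV _]]] [rW [LW [HW _]]]]].
  destruct rU as [|xU rU]; [simpl in LU; lia|].
  destruct rV as [|xV rV]; [simpl in LV; lia|].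
  destruct rW as [|xW rW]; [simpl in LW; lia|].
  pose proof (HU xU (or_introl eq_refl)) as HxU.
  pose proof (HV xV (or_introl eq_refl)) as HxV.
  pose proof (HW xW (or_introl eq_refl)) as HxW.
  assert (Hr1 : 1 <= r1).
  { destruct xU as [a0 b0].
    pose proof (zrow T HT 0 b0 N) as H1.
    pose proof (Dconst T HT N Hp 1 0 0 b0) as H2.
    rewrite Dformula, zz00 in H2 by exact Hp.
    replace (0 + N*1) with (0 + N) in H2 by ring. replace (b0 + N*0) with b0 in H2 by ring.
    pose proof (Z.mod_pos_bound a0 N HN).
    pose proof (cnt_ge (fun j => iU T (0 + j, b0)) (a0 mod N) N (fun j => iU_nn _ _) ltac:(lia)) as H3.
    cbv beta in H3.
    rewrite <- (iU_per T N Hp (0 + a0 mod N) b0 a0 b0 (a0 / N) 0) in H3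
      by (pose proof (Z.div_mod a0 N ltac:(lia)); lia).
    rewrite (iU_eq _ _ HxU) in H3. fold r1 in H2. lia. }
  assert (Hr2 : 1 <= r2).
  { destruct xV as [a0 b0].
    pose proof (zcol T a0 0 N) as H1.
    pose proof (Dconst T HT N Hp 0 1 a0 0) as H2.
    rewrite Dformula, zz00 in H2 by exact Hp.
    replace (0 + N*1) with (0 + N) in H2 by ring. replace (a0 + N*0) with a0 in H2 by ring.
    pose proof (Z.mod_pos_bound (b0 - 1) N HN).
    pose proof (cnt_ge (fun j => iV T (a0, 0 + j + 1)) ((b0 - 1) mod N) N (fun j => iV_nn _ _) ltac:(lia)) as H3.
    cbv beta in H3.
    rewrite <- (iV_per T N Hp a0 (0 + (b0-1) mod N + 1) a0 b0 0 ((b0 - 1) / N)) in H3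
      by (pose proof (Z.div_mod (b0 - 1) N ltac:(lia)); lia).
    rewrite (iV_eq _ _ HxV) in H3. fold r2 in H2. lia. }
  assert (Hr3 : 1 <= N - r1 - r2).
  { destruct xW as [a0 b0].
    pose proof (zdiag T HT (a0+1) b0 N) as H1.
    pose proof (Dconst T HT N Hp 1 1 (a0 + 1 - N) (b0 - N)) as H2.
    rewrite Dformula, zz00 in H2 by exact Hp.
    replace (a0 + 1 - N + N*1) with (a0 + 1) in H2 by ring. replace (b0 - N + N*1) with b0 in H2 by ring.
    pose proof (cnt_ge (fun k => iW T (a0 + 1 - 1 - k, b0 - k)) 0 N (fun j => iW_nn _ _) ltac:(lia)) as H3.
    cbv beta in H3.
    replace (a0 + 1 - 1 - 0) with a0 in H3 by ring. replace (b0 - 0) with b0 in H3 by ring.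
    rewrite (iW_eq _ _ HxW) in H3. fold r1 r2 in H2. lia. }
  assert (Hmono : forall k, Phi T N r1 r2 (f (S k)) >= Phi T N r1 r2 (f k) + 1).
  { intros k. destruct (Hpath k) as [Hf Ha]. rewrite Hf.
    destruct (f k) as [a b]. unfold Phi.
    destruct (ds k); cbn [arrow_in dvec] in *; unfold padd, psub, u, v, w in *; cbn [fst snd] in *.
    - rewrite Z.add_0_r. rewrite (zU T HT), (iU_neq _ _ Ha). nia.
    - rewrite Z.add_0_r in *. rewrite zV, (iV_neq _ _ Ha). nia.
    - replace (a + -1) with (a - 1) by ring. replace (b + -1) with (b - 1) by ring.
      replace (b - 0) with b in Ha by ring.
      rewrite (zW T HT), (iW_neq _ _ Ha). nia. }
  assert (Hgrow : forall k, Phi T N r1 r2 (f k) >= Phi T N r1 r2 (f O) + Z.of_nat k).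
  { induction k. simpl; lia. specialize (Hmono k). rewrite Nat2Z.inj_succ. lia. }
  destruct (box_bound (fun a b => Phi T N r1 r2 (a,b)) (Z.to_nat N) (Z.to_nat N)) as [M HM].
  rewrite Z2Nat.id in HM by lia.
  assert (Hbd : forall x, Phi T N r1 r2 x <= M).
  { intros [a b].
    assert (E : (a,b) = (a mod N + N*(a/N), b mod N + N*(b/N))).
    { f_equal; rewrite Z.add_comm; apply Z.div_mod; lia. }
    rewrite E, (Phi_per T HT N Hp r1 r2 eq_refl eq_refl).
    apply HM; apply Z.mod_pos_bound; lia. }
  specialize (Hgrow (Z.to_nat (M - Phi T N r1 r2 (f O) + 1))).
  pose proof (Hbd (f (Z.to_nat (M - Phi T N r1 r2 (f O) + 1)))).
  pose proof (Hbd (f O)).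
  lia.
Qed.
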